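(* Let $G=(V,E)$ be a 2-tree. Then $G$ contains no split independent set; that is, there is no set $S\subseteq V$ such that $S$ is independent in $G$ and the induced subgraph $\langle V\setminus S\rangle$ is either disconnected or isomorphic to $K_1$.
   Context: All graphs are finite, simple (no loops or multiple edges) and undirected. A 2-tree is a graph obtained from the triangle $K_3$ by repeatedly adding a new vertex adjacent to exactly the two endpoints of some existing edge. For $X\subseteq V$, $\langle X\rangle$ denotes the subgraph of $G$ induced by $X$. A set $S\subseteq V$ is a split independent set if $S$ is independent (no two vertices of $S$ are adjacent) and $\langle V\setminus S\rangle$ is either disconnected or a $K_1$. *)

(* Defs.v *)
From mathcomp Require Import all_boot.
Set Implicit Arguments. Unset Strict Implicit. Unset Printing Implicit Defensive.

Definition simple_graph (T : finType) (e : rel T) : Prop :=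
  symmetric e /\ irreflexive e.

(* [two_tree_on e X]: the subgraph of (T,e) induced by X is a 2-tree,
   built from a triangle by repeatedly adding a vertex adjacent to exactly
   the two endpoints of an existing edge. *)
Inductive two_tree_on (T : finType) (e : rel T) : {set T} -> Prop :=
  | tt_triangle (a b c : T) :
      e a b -> e b c -> e a c ->
      two_tree_on e [set a; b; c]
  | tt_add (Y : {set T}) (v u w : T) :
      two_tree_on e Y -> v \notin Y -> u \in Y -> w \in Y -> e u w ->
      [set x in Y | e v x] = [set u; w] ->
      two_tree_on e (v |: Y).

Definition two_tree (T : finType) (e : rel T) : Prop :=
  simple_graph e /\ two_tree_on e [set: T].

Definition induced_rel (T : finType) (e : rel T) (X : {set T}) : rel T :=
  fun x y => [&& x \in X, y \in X & e x y].

Definition disconnected_on (T : finType) (e : rel T) (X : {set T}) : Prop :=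
  exists x y, [/\ x \in X, y \in X & ~~ connect (induced_rel e X) x y].

Definition independent (T : finType) (e : rel T) (S : {set T}) : Prop :=
  forall x y, x \in S -> y \in S -> ~~ e x y.

Definition split_independent (T : finType) (e : rel T) (S : {set T}) : Prop :=
  independent e S /\ (disconnected_on e (~: S) \/ #|~: S| = 1).

(* Main.v *)
Require Import Defs.
From mathcomp Require Import all_boot.

Section Aux.
Variables (T : finType) (e : rel T).
Hypotheses (He : symmetric e) (Hi : irreflexive e).

Lemma conn_mono (A B : {set T}) x y : A \subset B ->
  connect (induced_rel e A) x y -> connect (induced_rel e B) x y.
Proof.
move=> sAB; apply: connect_sub => p q /and3P[pA qA epq]; apply: connect1.
by rewrite /induced_rel (subsetP sAB _ pA) (subsetP sAB _ qA) epq.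
Qed.

Lemma key X : two_tree_on e X -> forall S, independent e S ->
  (exists x y, [/\ x != y, x \in X :\: S & y \in X :\: S]) /\
  forall x y, x \in X :\: S -> y \in X :\: S ->
    connect (induced_rel e (X :\: S)) x y.
Proof.
elim=> {X} [a b c eab ebc eac | Y v u w HY IH vY uY wY euw NY] S HS.
- have eqe : forall x y, x \in [set a; b; c] -> y \in [set a; b; c] ->
      x = y \/ e x y.
    move=> x y; rewrite !inE => /orP[/orP[/eqP->|/eqP->]|/eqP->]
      /orP[/orP[/eqP->|/eqP->]|/eqP->]; auto; right; by rewrite // He.
  split.
  + case aS: (a \in S).
    * have bS : b \notin S by apply/negP=> bS; move: (HS _ _ aS bS); rewrite eab.
      have cS : c \notin S by apply/negP=> cS; move: (HS _ _ aS cS); rewrite eac.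
      exists b, c; split; rewrite ?inE ?bS ?cS ?eqxx ?orbT //.
      by apply/eqP=> bc; move: ebc; rewrite bc Hi.
    * case bS: (b \in S).
      - have cS : c \notin S by apply/negP=> cS; move: (HS _ _ bS cS); rewrite ebc.
        exists a, c; split; rewrite ?inE ?aS ?cS ?eqxx ?orbT //.
        by apply/eqP=> ac; move: eac; rewrite ac Hi.
      - exists a, b; split; rewrite ?inE ?aS ?bS ?eqxx ?orbT //.
        by apply/eqP=> ab; move: eab; rewrite ab Hi.
  + move=> x y xX yX; have /setDP[xX' _] := xX; have /setDP[yX' _] := yX.
    case: (eqe x y xX' yX') => [->|exy]; first exact: connect0.
    by apply: connect1; rewrite /induced_rel xX yX exy.
- have [[x [y [xy xY yY]]] Hc] := IH S HS.
  have sub : Y :\: S \subset (v |: Y) :\: S.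
    by apply: setSD; apply: subsetUr.
  split; first by exists x, y; split; rewrite // (subsetP sub).
  case vS: (v \in S).
  + have eqs : (v |: Y) :\: S = Y :\: S.
      apply/setP=> z; rewrite !inE; case: eqP => [->|]; by rewrite ?vS.
    by rewrite eqs.
  +
    have hu : u \in [set u; w] by rewrite !inE eqxx.
    have hw : w \in [set u; w] by rewrite !inE eqxx orbT.
    have evu : e v u by move: hu; rewrite -NY inE => /andP[].
    have evw : e v w by move: hw; rewrite -NY inE => /andP[].
    have [z zY evz] : exists2 z, z \in Y :\: S & e v z.
      case uS: (u \in S).
      * have wS : w \notin S by apply/negP=> wS; move: (HS _ _ uS wS); rewrite euw.
        by exists w; rewrite // inE wS.
      * by exists u; rewrite // inE uS.
    have vX : v \in (v |: Y) :\: S by rewrite !inE eqxx vS.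
    have zX : z \in (v |: Y) :\: S by rewrite (subsetP sub).
    have vz : connect (induced_rel e ((v |: Y) :\: S)) v z.
      by apply: connect1; rewrite /induced_rel vX zX evz.
    have zv : connect (induced_rel e ((v |: Y) :\: S)) z v.
      by apply: connect1; rewrite /induced_rel vX zX He evz.
    have inY : forall t, t \in (v |: Y) :\: S -> t != v -> t \in Y :\: S.
      by move=> t; rewrite !inE => /andP[-> /orP[/eqP->|->]]; rewrite ?eqxx.
    move=> p q pX qX.
    case: (eqVneq p v) => [->|pv]; case: (eqVneq q v) => [->|qv].
    * exact: connect0.
    * apply: connect_trans vz _; apply: conn_mono sub _; exact: Hc (inY _ qX qv).
    * apply: connect_trans _ zv; apply: conn_mono sub _; exact: Hc (inY _ pX pv) zY.
    * apply: conn_mono sub _; exact: Hc (inY _ pX pv) (inY _ qX qv).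
Qed.
End Aux.

Theorem mainTheorem1 (T : finType) (e : rel T) :
  two_tree e -> ~ exists S : {set T}, split_independent e S.
Proof.
move=> [[He Hi] HT] [S [HS Hd]].
have [[x [y [xy xS yS]]] Hc] := @key T e He Hi _ HT S HS.
rewrite setTD in xS yS Hc.
case: Hd => [[p [q [pS qS nc]]]|H1].
- by move: nc; rewrite Hc.
- have /cards1P[z Hz] : #|~: S| == 1 by rewrite H1.
  by move: xS yS xy; rewrite Hz !inE => /eqP-> /eqP->; rewrite eqxx.
Qed.
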